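(* In the setting described in the context: (1) If the model is DUR with constants $d,k$ and the parametrisation $(\tilde X,\Theta)$ is GTIP, then for all sufficiently small $\alpha>0$, $\mathbf E\{e^{\alpha X}\mid Y=y,\Theta=\theta\}\le e^{\alpha\theta}(1-\alpha d/2)$ for all $\theta>k$, and $\mathbf E\{e^{-\alpha X}\mid Y=y,\Theta=\theta\}\le e^{-\alpha\theta}(1-\alpha d/2)$ for all $\theta<-k$. (2) If the model is PUR with constants $d,k$ and the parametrisation $(X,\Theta)$ is GTIP, then for all sufficiently small $\alpha>0$, $\mathbf E\{e^{\alpha(y-\tilde X)}\mid Y=y,\Theta=\theta\}\le e^{\alpha\theta}(1-\alpha d/2)$ for all $\theta>k$, and $\mathbf E\{e^{-\alpha(y-\tilde X)}\mid Y=y,\Theta=\theta\}\le e^{-\alpha\theta}(1-\alpha d/2)$ for all $\theta<-k$.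
   Context: Fix an observed value $y\in\mathbb R$. Consider the model $Y=X+Z_1$, $X=\Theta+Z_2$, where $Z_1,Z_2$ are independent real random variables, independent of $\Theta$, whose distributions are symmetric about $0$ and have continuous, bounded, everywhere positive Lebesgue densities $f_1,f_2$; $\Theta$ is given the improper flat (Lebesgue) prior on $\mathbb R$, and the posterior $\mathcal L(X,\Theta\mid Y=y)$ is proper. Write $\tilde X=X-\Theta$. A parametrisation $(U,\Theta)$, $U\in\{X,\tilde X\}$, is GTIP (geometrically tight in parameter) if there are constants $a,b>0$ not depending on $\theta$ such that $\mathbf P(|U|>x\mid Y=y,\Theta=\theta)\le ae^{-bx}$ for all $\theta\in\mathbb R$ and $x\ge0$. The model is DUR (data uniformly relevant) with constants $d,k>0$ if $|\mathbf E\{X\mid Y=y,\Theta=\theta\}|\le|\theta|-d$ for all $|\theta|>k$; it is PUR (parameter uniformly relevant) with constants $d,k>0$ if $\operatorname{sgn}(\theta)\,\mathbf E\{X-y\mid Y=y,\Theta=\theta\}\ge d$ for all $|\theta|>k$. *)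

(* Defs.v *)
From Stdlib Require Import Reals Lra.
Open Scope R_scope.

Definition Rint (f : R -> R) (a b v : R) : Prop :=
  exists pr : Riemann_integrable f a b, RiemannInt pr = v.

Definition ImpInt (f : R -> R) (l : R) : Prop :=
  (forall a b, exists v, Rint f a b v) /\
  (forall eps, 0 < eps -> exists M, forall a b v,
      a <= - M -> M <= b -> Rint f a b v -> Rabs (v - l) < eps).

Definition good_density (f : R -> R) : Prop :=
  continuity f /\
  (exists B, forall x, Rabs (f x) <= B) /\
  (forall x, 0 < f x) /\
  (forall x, f (- x) = f x) /\
  ImpInt f 1.

(* Unnormalised conditional density of X given Y = y, Theta = th:
   f1(y - x) f2(x - th). *)
Definition wgt (f1 f2 : R -> R) (y th : R) (x : R) : R :=
  f1 (y - x) * f2 (x - th).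

Definition CondExp (f1 f2 : R -> R) (y th : R) (g : R -> R) (v : R) : Prop :=
  exists N Z, ImpInt (fun x => g x * wgt f1 f2 y th x) N /\
              ImpInt (wgt f1 f2 y th) Z /\ v = N / Z.

(* P(|X - c| > r | Y = y, Theta = th) <= p, written as
   1 - P(c - r <= X <= c + r | ...). *)
Definition CondTailLe (f1 f2 : R -> R) (y th c r p : R) : Prop :=
  forall Z I, ImpInt (wgt f1 f2 y th) Z ->
              Rint (wgt f1 f2 y th) (c - r) (c + r) I ->
              1 - I / Z <= p.

(* GTIP for the parametrisation (X, Theta): U = X (centre c = 0). *)
Definition GTIP_X (f1 f2 : R -> R) (y : R) : Prop :=
  exists a b, 0 < a /\ 0 < b /\
    forall th x, 0 <= x -> CondTailLe f1 f2 y th 0 x (a * exp (- (b * x))).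

(* GTIP for the parametrisation (Xtilde, Theta): U = X - Theta (centre c = th). *)
Definition GTIP_Xt (f1 f2 : R -> R) (y : R) : Prop :=
  exists a b, 0 < a /\ 0 < b /\
    forall th x, 0 <= x -> CondTailLe f1 f2 y th th x (a * exp (- (b * x))).

Definition sgn (t : R) : R :=
  if Rlt_dec 0 t then 1 else if Rlt_dec t 0 then -1 else 0.

Definition DUR (f1 f2 : R -> R) (y d k : R) : Prop :=
  0 < d /\ 0 < k /\
  forall th, k < Rabs th ->
    exists v, CondExp f1 f2 y th (fun x => x) v /\ Rabs v <= Rabs th - d.

Definition PUR (f1 f2 : R -> R) (y d k : R) : Prop :=
  0 < d /\ 0 < k /\
  forall th, k < Rabs th ->
    exists v, CondExp f1 f2 y th (fun x => x - y) v /\ d <= sgn th * v.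

(* Main.v *)
Require Import Defs.
From Stdlib Require Import Reals Lra Lia FunctionalExtensionality ClassicalEpsilon.
Open Scope R_scope.

Lemma Rint_cont f a b : continuity f -> exists v, Rint f a b v.
Proof.
  intro Hc. destruct (Rle_dec a b) as [H|H].
  - assert (pr : Riemann_integrable f a b) by (apply continuity_implies_RiemannInt; auto).
    exists (RiemannInt pr); exists pr; reflexivity.
  - assert (pr : Riemann_integrable f b a) by (apply continuity_implies_RiemannInt; auto; lra).
    pose proof (RiemannInt_P1 pr) as pr'. exists (RiemannInt pr'); exists pr'; reflexivity.
Qed.

Lemma Rint_unique f a b u v : Rint f a b u -> Rint f a b v -> u = v.
Proof. intros [p1 <-] [p2 <-]. apply RiemannInt_P5. Qed.

Lemma Rint_lin f g a b l u v : Rint f a b u -> Rint g a b v ->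
  Rint (fun x => f x + l * g x) a b (u + l * v).
Proof.
  intros [p1 <-] [p2 <-]. exists (RiemannInt_P10 l p1 p2). apply RiemannInt_P13.
Qed.

Lemma Rint_mono f g a b u v : a <= b -> (forall x, a <= x <= b -> f x <= g x) ->
  Rint f a b u -> Rint g a b v -> u <= v.
Proof.
  intros Hab H [p1 <-] [p2 <-]. apply RiemannInt_P19; auto.
  intros; apply H; lra.
Qed.

Lemma Rint_chasles f a b c u v w : Rint f a b u -> Rint f b c v -> Rint f a c w -> w = u + v.
Proof. intros [p1 <-] [p2 <-] [p3 <-]. symmetry; apply RiemannInt_P26. Qed.

Lemma Rint_nonneg f a b v : a <= b -> (forall x, a <= x <= b -> 0 <= f x) ->
  Rint f a b v -> 0 <= v.
Proof.
  intros Hab H Hv.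
  assert (H0 : Rint (fct_cte 0) a b 0).
  { exists (RiemannInt_P14 a b 0). rewrite RiemannInt_P15. ring. }
  apply (Rint_mono _ _ _ _ _ _ Hab) with (2:=H0) (3:=Hv). intros; unfold fct_cte; auto.
Qed.

Lemma Rint_ext f g a b v : (forall x, f x = g x) -> Rint f a b v -> Rint g a b v.
Proof. intros H. replace g with f; auto. apply functional_extensionality; auto. Qed.

Lemma Rint_zero a b : Rint (fun _ => 0) a b 0.
Proof.
  assert (H0 : Rint (fct_cte 0) a b 0).
  { exists (RiemannInt_P14 a b 0). rewrite RiemannInt_P15. ring. }
  revert H0. apply Rint_ext. intros; reflexivity.
Qed.

Lemma Rint_scale f a b p u : Rint f a b u -> Rint (fun x => p * f x) a b (p*u).
Proof.
  intro H. pose proof (Rint_lin (fun _ => 0) f a b p 0 u (Rint_zero a b) H) as H2.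
  replace (p*u) with (0 + p*u) by ring. revert H2. apply Rint_ext. intros; ring.
Qed.

Lemma Rint_ring f A' A B B' u v : continuity f -> A' <= A -> A <= B -> B <= B' ->
  (forall x, A' <= x <= A -> 0 <= f x) -> (forall x, B <= x <= B' -> 0 <= f x) ->
  Rint f A B u -> Rint f A' B' v -> u <= v.
Proof.
  intros Hc h1 h2 h3 P1 P2 Hu Hv.
  destruct (Rint_cont f A' A Hc) as [p Hp].
  destruct (Rint_cont f B B' Hc) as [q Hq].
  destruct (Rint_cont f A' B Hc) as [r Hr].
  pose proof (Rint_chasles _ _ _ _ _ _ _ Hp Hu Hr).
  pose proof (Rint_chasles _ _ _ _ _ _ _ Hr Hq Hv).
  pose proof (Rint_nonneg _ _ _ _ h1 P1 Hp).
  pose proof (Rint_nonneg _ _ _ _ h3 P2 Hq). lra.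
Qed.

Lemma ImpInt_lin f g p q l1 l2 : continuity f -> continuity g ->
  ImpInt f l1 -> ImpInt g l2 -> ImpInt (fun x => p * f x + q * g x) (p * l1 + q * l2).
Proof.
  intros cf cg [_ H1] [_ H2]. split.
  - intros a b. destruct (Rint_cont f a b cf) as [u Hu]. destruct (Rint_cont g a b cg) as [v Hv].
    exists (p*u + q*v).
    assert (Hpu : Rint (fun x => p * f x) a b (p*u)).
    { apply Rint_scale; auto. }
    replace (p*u + q*v) with (p*u + q*v) by ring. apply Rint_lin; auto.
  - intros eps Heps.
    set (e := eps / (2 * (Rabs p + Rabs q + 1))).
    assert (He : 0 < e). { unfold e; apply Rdiv_lt_0_compat; auto. pose proof (Rabs_pos p); pose proof (Rabs_pos q); lra. }
    destruct (H1 e He) as [M1 HM1]. destruct (H2 e He) as [M2 HM2].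
    exists (Rmax M1 M2). intros a b v Ha Hb Hv.
    destruct (Rint_cont f a b cf) as [u Hu]. destruct (Rint_cont g a b cg) as [w Hw].
    assert (Hpu : Rint (fun x => p * f x) a b (p*u)).
    { apply Rint_scale; auto. }
    pose proof (Rint_lin _ _ _ _ q _ _ Hpu Hw) as Hs.
    rewrite (Rint_unique _ _ _ _ _ Hv Hs).
    assert (E1 : Rabs (u - l1) < e) by (apply (HM1 a b); auto; pose proof (Rmax_l M1 M2); pose proof (Rmax_r M1 M2); lra).
    assert (E2 : Rabs (w - l2) < e) by (apply (HM2 a b); auto; pose proof (Rmax_l M1 M2); pose proof (Rmax_r M1 M2); lra).
    replace (p * u + q * w - (p * l1 + q * l2)) with (p * (u - l1) + q * (w - l2)) by ring.
    eapply Rle_lt_trans. apply Rabs_triang. rewrite !Rabs_mult.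
    assert (Rabs p * Rabs (u - l1) <= Rabs p * e) by (apply Rmult_le_compat_l; [apply Rabs_pos|lra]).
    assert (Rabs q * Rabs (w - l2) <= Rabs q * e) by (apply Rmult_le_compat_l; [apply Rabs_pos|lra]).
    assert ((Rabs p + Rabs q) * e < eps).
    { unfold e. pose proof (Rabs_pos p); pose proof (Rabs_pos q).
      apply (Rmult_lt_reg_r (2 * (Rabs p + Rabs q + 1))). lra.
      field_simplify; [|lra]. nra. }
    lra.
Qed.

Lemma ImpInt_ext f g l : (forall x, f x = g x) -> ImpInt f l -> ImpInt g l.
Proof. intros H. replace g with f; auto. apply functional_extensionality; auto. Qed.

Lemma ImpInt_ge f l A B v : continuity f -> (forall x, 0 <= f x) -> ImpInt f l ->
  A <= B -> Rint f A B v -> v <= l.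
Proof.
  intros cf pos [_ H] hAB Hv. apply Rle_plus_epsilon. intros eps Heps.
  destruct (H eps Heps) as [M HM].
  set (A' := Rmin A (- Rabs M)). set (B' := Rmax B (Rabs M)).
  destruct (Rint_cont f A' B' cf) as [w Hw].
  assert (v <= w).
  { apply (Rint_ring f A' A B B' v w cf); auto; unfold A', B'.
    apply Rmin_l. apply Rmax_l. }
  assert (Rabs (w - l) < eps).
  { apply (HM A' B'); auto; unfold A', B'.
    pose proof (Rmin_r A (- Rabs M)). pose proof (Rle_abs M). lra.
    pose proof (Rmax_r B (Rabs M)). pose proof (Rle_abs M). lra. }
  apply Rabs_def2 in H1. lra.
Qed.

Lemma ImpInt_exists f Bd : continuity f -> (forall x, 0 <= f x) ->
  (forall A B v, A <= B -> Rint f A B v -> v <= Bd) -> exists l, ImpInt f l.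
Proof.
  intros cf pos Hb.
  assert (HS : forall n : nat, exists v, Rint f (- INR n) (INR n) v) by (intros; apply Rint_cont; auto).
  pose (S := fun n : nat => proj1_sig (constructive_indefinite_description _ (HS n))).
  assert (HSn : forall n, Rint f (- INR n) (INR n) (S n)).
  { intro n. unfold S. destruct (constructive_indefinite_description _ (HS n)); auto. }
  assert (mono : forall n m, (n <= m)%nat -> S n <= S m).
  { intros n m Hnm. apply (Rint_ring f (- INR m) (- INR n) (INR n) (INR m)); auto.
    apply le_INR in Hnm; lra. pose proof (pos_INR n); lra. apply le_INR in Hnm; lra. }
  assert (gr : Un_growing S) by (intro n; apply mono; lia).
  assert (ub : has_ub S).
  { exists Bd. intros x [n ->]. apply (Hb (- INR n) (INR n)); auto. pose proof (pos_INR n); lra. }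
  destruct (growing_cv S gr ub) as [l Hl]. exists l. split.
  - intros; apply Rint_cont; auto.
  - intros eps Heps. destruct (Hl eps Heps) as [N HN]. exists (INR N).
    intros a b v Ha Hb' Hv.
    pose proof (pos_INR N).
    assert (S N <= v).
    { apply (Rint_ring f a (- INR N) (INR N) b); auto; lra. }
    destruct (INR_unbounded (Rmax (-a) b)) as [m Hm].
    assert (v <= S m).
    { apply (Rint_ring f (- INR m) a b (INR m)); auto.
      pose proof (Rmax_l (-a) b); lra. lra. pose proof (Rmax_r (-a) b); lra. }
    pose proof (growing_ineq S l gr Hl m).
    specialize (HN N (Nat.le_refl N)). unfold Rdist in HN. apply Rabs_def2 in HN.
    apply Rabs_def1; lra.
Qed.

Lemma exp_le x y : x <= y -> exp x <= exp y.
Proof. intro H. destruct (Rle_lt_or_eq_dec _ _ H). left; apply exp_increasing; auto. subst; lra. Qed.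

Lemma P1 t : exp t - 1 - t <= t^2 * exp (Rabs t).
Proof.
  assert (H1 : exp t - 1 <= t * exp t).
  { pose proof (exp_ineq1_le (-t)). pose proof (exp_pos t).
    assert (exp (-t) * exp t = 1) by (rewrite <- exp_plus; replace (-t+t) with 0 by ring; apply exp_0).
    nra. }
  pose proof (exp_pos t).
  destruct (Rle_dec 0 t).
  - rewrite Rabs_right by lra. nra.
  - rewrite Rabs_left by lra. pose proof (exp_ineq1_le t).
    assert (1 <= exp (-t)) by (pose proof (exp_ineq1_le (-t)); lra).
    assert (t^2 <= t^2 * exp (-t)) by nra. nra.
Qed.

Lemma P2 v : 0 <= v -> v^2 <= 4 * exp v.
Proof.
  intro Hv. pose proof (exp_ineq1_le (v/2)).
  assert (exp v = exp (v/2) * exp (v/2)) by (rewrite <- exp_plus; f_equal; field).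
  nra.
Qed.

Lemma P3 al b u : 0 < b -> 0 < al -> al <= b/4 ->
  exp (al*u) <= 1 + al*u + al^2 * (64/b^2) * exp ((b/2) * Rabs u).
Proof.
  intros Hb Ha Hab.
  pose proof (P1 (al*u)) as H1.
  rewrite Rabs_mult, (Rabs_right al) in H1 by lra.
  pose proof (P2 ((b/4) * Rabs u)) as H2.
  assert (0 <= b/4 * Rabs u) by (pose proof (Rabs_pos u); nra).
  specialize (H2 H).
  assert (Hu : u^2 <= 64/b^2 * exp (b/4 * Rabs u)).
  { replace ((b/4*Rabs u)^2) with ((b/4)^2 * u^2) in H2.
    2:{ rewrite Rpow_mult_distr. f_equal. rewrite <- Rsqr_pow2, <- Rsqr_pow2, Rsqr_abs. reflexivity. }
    apply (Rmult_le_reg_l ((b/4)^2)). nra.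
    replace ((b/4)^2 * (64/b^2 * exp (b/4*Rabs u))) with (4 * exp (b/4*Rabs u)) by (field; lra).
    lra. }
  assert (He : exp (al * Rabs u) * exp (b/4 * Rabs u) <= exp (b/2 * Rabs u)).
  { rewrite <- exp_plus. apply exp_le. pose proof (Rabs_pos u). nra. }
  pose proof (exp_pos (al * Rabs u)).
  assert (al^2*u^2*exp (al*Rabs u) <= al^2 * (64/b^2 * exp (b/4*Rabs u)) * exp (al*Rabs u)).
  { apply Rmult_le_compat_r; [lra|]. apply Rmult_le_compat_l; [nra|lra]. }
  replace ((al*u)^2) with (al^2*u^2) in H1 by ring.
  assert (0 < al^2 * (64/b^2)). { apply Rmult_lt_0_compat. nra. apply Rdiv_lt_0_compat; nra. }
  nra.
Qed.

Lemma P4 al b u : 0 < b -> 0 < al -> al <= b/4 -> exp (al*u) <= exp ((b/2) * Rabs u).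
Proof.
  intros. apply exp_le. pose proof (Rle_abs u). pose proof (Rabs_pos u).
  destruct (Rle_dec 0 u); nra.
Qed.

Lemma cont_exp_abs (beta c : R) : continuity (fun x => exp (beta * Rabs (x - c))).
Proof.
  intro x.
  apply (continuity_pt_comp (fun x => beta * Rabs (x - c)) exp).
  - apply continuity_pt_mult. apply continuity_pt_const; intros ? ?; reflexivity.
    apply (continuity_pt_comp (fun x => x - c) Rabs).
    apply continuity_pt_minus. apply derivable_continuous_pt, derivable_pt_id.
    apply continuity_pt_const; intros ? ?; reflexivity.
    apply Rcontinuity_abs.
  - apply derivable_continuous_pt, derivable_pt_exp.
Qed.

Lemma Rint_point f c v : continuity f -> Rint f c c v -> v = 0.
Proof. intros cf H. pose proof (Rint_chasles _ _ _ _ _ _ _ H H H). lra. Qed.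

Lemma J_bound (w : R -> R) Z a b c : continuity w -> (forall x, 0 <= w x) -> ImpInt w Z ->
  0 < Z -> 0 < a -> 0 < b ->
  (forall r I, 0 <= r -> Rint w (c-r) (c+r) I -> Z - I <= a * exp (-(b*r)) * Z) ->
  forall A B v, A <= B -> Rint (fun x => exp ((b/2) * Rabs (x - c)) * w x) A B v ->
  v <= Z * (1 + a * exp (b/2)).
Proof.
  intros cw pw HZ Zpos apos bpos Tail.
  set (beta := b/2). set (E := exp beta).
  set (H := fun x => exp (beta * Rabs (x - c)) * w x).
  assert (cH : continuity H).
  { unfold H. intro x. apply continuity_pt_mult. apply cont_exp_abs. apply cw. }
  assert (pH : forall x, 0 <= H x).
  { intro x; unfold H. pose proof (exp_pos (beta * Rabs (x-c))). pose proof (pw x). nra. }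
  assert (Eg1 : 1 <= E). { unfold E. pose proof (exp_ineq1_le beta). unfold beta in *; lra. }
  assert (Ind : forall n : nat, forall Iv Jv, Rint w (c - INR n) (c + INR n) Iv ->
      Rint H (c - INR n) (c + INR n) Jv ->
      Jv + exp (beta * INR n) * (Z - Iv) <= Z * (1 + a*E - a*E / exp (beta * INR n))).
  { induction n as [|n IH]; intros Iv Jv HI HJ.
    - simpl in HI, HJ. rewrite Rminus_0_r, Rplus_0_r in HI, HJ.
      apply Rint_point in HI; auto. apply Rint_point in HJ; auto. subst.
      simpl. rewrite Rmult_0_r, exp_0. unfold Rdiv. rewrite Rinv_1. lra.
    - destruct (Rint_cont w (c - INR n) (c + INR n) cw) as [Iv0 HI0].
      destruct (Rint_cont H (c - INR n) (c + INR n) cH) as [Jv0 HJ0].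
      specialize (IH Iv0 Jv0 HI0 HJ0).
      set (p := exp (beta * INR n)).
      assert (ppos : 0 < p) by apply exp_pos.
      assert (HpS : exp (beta * INR (S n)) = p * E).
      { rewrite S_INR. unfold p, E. rewrite <- exp_plus. f_equal; ring. }
      rewrite HpS.
      set (g := p * E).
      set (D := fun x => g * w x + (-1) * H x).
      assert (HD0 : Rint D (c - INR n) (c + INR n) (g * Iv0 + (-1) * Jv0)).
      { apply Rint_lin; auto. apply Rint_scale; auto. }
      assert (HD1 : Rint D (c - INR (S n)) (c + INR (S n)) (g * Iv + (-1) * Jv)).
      { apply Rint_lin; auto. apply Rint_scale; auto. }
      assert (Dnn : forall x, Rabs (x - c) <= INR (S n) -> 0 <= D x).
      { intros x Hx. unfold D, H, g.
        assert (exp (beta * Rabs (x - c)) <= p * E).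
        { rewrite <- HpS. apply exp_le. unfold beta. apply Rmult_le_compat_l; lra. }
        pose proof (pw x). nra. }
      assert (cD : continuity D).
      { unfold D. intro x. apply continuity_pt_plus. apply continuity_pt_mult.
        apply continuity_pt_const; intros ? ?; reflexivity. apply cw.
        apply continuity_pt_mult. apply continuity_pt_const; intros ? ?; reflexivity. apply cH. }
      assert (SnI : INR (S n) = INR n + 1) by apply S_INR.
      pose proof (pos_INR n).
      assert (Ann : g * Iv0 + (-1) * Jv0 <= g * Iv + (-1) * Jv).
      { apply (Rint_ring D (c - INR (S n)) (c - INR n) (c + INR n) (c + INR (S n))); auto; try lra.
        - intros x Hx. apply Dnn. rewrite Rabs_left1; lra.
        - intros x Hx. apply Dnn. rewrite Rabs_right; lra. }
      assert (T0 := Tail (INR n) Iv0 (pos_INR n) HI0).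
      assert (Hexp : exp (-(b * INR n)) = / (p * p)).
      { unfold p. rewrite <- exp_plus. rewrite <- exp_Ropp. idtac. f_equal. unfold beta. lra. }
      rewrite Hexp in T0.
      assert (IZ : Iv0 <= Z) by (apply (ImpInt_ge w Z (c - INR n) (c + INR n)); auto; lra).
      assert (Step : Jv + g * (Z - Iv) <= Jv0 + p * (Z - Iv0) + (g - p) * (Z - Iv0)) by lra.
      assert (gp : 0 <= g - p) by (unfold g; nra).
      assert (Hq : (g - p) * (Z - Iv0) <= (g - p) * (a * / (p * p) * Z)) by (apply Rmult_le_compat_l; auto).
      assert (Eq : (g - p) * (a * / (p * p) * Z) = a * E * Z / p - a * Z / p) by (unfold g; field; lra).
      assert (Tg : Z * (1 + a * E - a * E / g) = Z * (1 + a * E - a * E / p) + (a * E * Z / p - a * Z / p)).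
      { unfold g. field. split; lra. }
      rewrite Tg. fold p in IH. lra. }
  intros A B v hAB Hv.
  fold beta in Hv. change (Rint H A B v) in Hv.
  destruct (INR_unbounded (Rmax (Rabs (A - c)) (Rabs (B - c)))) as [n Hn].
  pose proof (Rmax_l (Rabs (A - c)) (Rabs (B - c))). pose proof (Rmax_r (Rabs (A - c)) (Rabs (B - c))).
  pose proof (Rle_abs (A - c)). pose proof (Rle_abs (-(A - c))). rewrite Rabs_Ropp in H3.
  pose proof (Rle_abs (B - c)). pose proof (Rle_abs (-(B - c))). rewrite Rabs_Ropp in H5.
  destruct (Rint_cont w (c - INR n) (c + INR n) cw) as [Iv HI].
  destruct (Rint_cont H (c - INR n) (c + INR n) cH) as [Jv HJ].
  specialize (Ind n Iv Jv HI HJ).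
  assert (v <= Jv) by (apply (Rint_ring H (c - INR n) A B (c + INR n)); auto; lra).
  assert (IZ : Iv <= Z) by (apply (ImpInt_ge w Z (c - INR n) (c + INR n)); auto; lra).
  set (p := exp (beta * INR n)) in *.
  assert (0 < p) by apply exp_pos.
  assert (0 <= a * E / p) by (unfold Rdiv; apply Rmult_le_pos; [nra| left; apply Rinv_0_lt_compat; auto]).
  assert (0 <= p * (Z - Iv)) by nra.
  fold E. nra.
Qed.

Lemma cont_lin s e : continuity (fun x => s * (x - e)).
Proof.
  intro x. apply continuity_pt_mult. apply continuity_pt_const; intros ? ?; reflexivity.
  apply continuity_pt_minus. apply derivable_continuous_pt, derivable_pt_id.
  apply continuity_pt_const; intros ? ?; reflexivity.
Qed.

Lemma cont_exp_lin al s e : continuity (fun x => exp (al * (s * (x - e)))).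
Proof.
  intro x. apply (continuity_pt_comp (fun x => al * (s * (x - e))) exp).
  apply continuity_pt_mult. apply continuity_pt_const; intros ? ?; reflexivity. apply cont_lin.
  apply derivable_continuous_pt, derivable_pt_exp.
Qed.

Lemma cont_mul f g : continuity f -> continuity g -> continuity (fun x => f x * g x).
Proof. intros; intro x; apply continuity_pt_mult; auto. Qed.

Lemma cont_cst k : continuity (fun _ => k).
Proof. intro x; apply continuity_pt_const; intros ? ?; reflexivity. Qed.

Lemma cont_add f g : continuity f -> continuity g -> continuity (fun x => f x + g x).
Proof. intros; intro x; apply continuity_pt_plus; auto. Qed.

Definition Kc a b c e := 64 / b^2 * exp ((b/2) * Rabs (c - e)) * (1 + a * exp (b/2)).

Lemma core (w : R -> R) Z a b c e s L :
  continuity w -> (forall x, 0 <= w x) -> ImpInt w Z -> 0 < Z -> 0 < a -> 0 < b ->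
  (s = 1 \/ s = -1) ->
  (forall r I, 0 <= r -> Rint w (c-r) (c+r) I -> Z - I <= a * exp (-(b*r)) * Z) ->
  ImpInt (fun x => s * (x - e) * w x) L ->
  forall al, 0 < al -> al <= b/4 ->
  exists N, ImpInt (fun x => exp (al * (s * (x - e))) * w x) N /\
            N <= Z + al * L + al^2 * Kc a b c e * Z.
Proof.
  intros cw pw HZ Zpos apos bpos Hs Tail HL al alpos alle.
  set (beta := b/2). set (Ce := exp (beta * Rabs (c - e))).
  set (H := fun x => exp (beta * Rabs (x - c)) * w x).
  assert (cH : continuity H) by (apply cont_mul; [apply cont_exp_abs|auto]).
  set (F := fun x => exp (al * (s * (x - e))) * w x).
  assert (cF : continuity F) by (apply cont_mul; [apply cont_exp_lin|auto]).
  assert (Cepos : 0 < Ce) by apply exp_pos.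
  assert (absu : forall x, Rabs (s * (x - e)) <= Rabs (x - c) + Rabs (c - e)).
  { intro x. rewrite Rabs_mult. destruct Hs as [-> | ->].
    rewrite Rabs_R1, Rmult_1_l. replace (x - e) with ((x - c) + (c - e)) by ring. apply Rabs_triang.
    replace (Rabs (-1)) with 1 by (rewrite Rabs_left; lra). rewrite Rmult_1_l. replace (x - e) with ((x - c) + (c - e)) by ring. apply Rabs_triang. }
  assert (eb : forall x, exp (beta * Rabs (s * (x - e))) <= Ce * exp (beta * Rabs (x - c))).
  { intro x. unfold Ce. rewrite <- exp_plus. apply exp_le. specialize (absu x). unfold beta. nra. }
  assert (FH : forall x, F x <= Ce * H x).
  { intro x. unfold F, H. pose proof (P4 al b (s * (x - e)) bpos alpos alle). fold beta in H0.
    pose proof (eb x). pose proof (pw x). nra. }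
  assert (pF : forall x, 0 <= F x).
  { intro x; unfold F. pose proof (exp_pos (al * (s * (x - e)))). pose proof (pw x). nra. }
  assert (JB := J_bound w Z a b c cw pw HZ Zpos apos bpos Tail).
  destruct (ImpInt_exists F (Ce * (Z * (1 + a * exp (b/2)))) cF pF) as [N HN].
  { intros A B v hAB Hv. destruct (Rint_cont H A B cH) as [vh Hvh].
    pose proof (JB A B vh hAB Hvh).
    assert (v <= Ce * vh).
    { apply (Rint_mono F (fun x => Ce * H x) A B v (Ce * vh) hAB).
      intros; apply FH. exact Hv. apply Rint_scale; auto. }
    nra. }
  exists N. split; [exact HN|].
  set (K1 := al^2 * (64 / b^2) * Ce).
  set (G := fun x => (w x + al * (s * (x - e) * w x)) + K1 * H x).
  assert (FG : forall x, F x <= G x).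
  { intro x. unfold F, G, H, K1.
    pose proof (P3 al b (s * (x - e)) bpos alpos alle). fold beta in H0.
    pose proof (eb x). pose proof (pw x).
    assert (0 <= al^2 * (64/b^2)). { apply Rmult_le_pos. nra. unfold Rdiv. apply Rmult_le_pos. lra. left; apply Rinv_0_lt_compat; nra. }
    assert (exp (al * (s * (x - e))) * w x <= (1 + al * (s * (x - e)) + al ^ 2 * (64 / b ^ 2) * exp (beta * Rabs (s * (x - e)))) * w x) by (apply Rmult_le_compat_r; auto).
    assert (al ^ 2 * (64 / b ^ 2) * exp (beta * Rabs (s * (x - e))) * w x <= al ^ 2 * (64 / b ^ 2) * (Ce * exp (beta * Rabs (x - c))) * w x).
    { apply Rmult_le_compat_r; auto. apply Rmult_le_compat_l; auto. }
    nra. }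
  apply Rle_plus_epsilon. intros eps Heps.
  set (eps' := eps / (2 + al)).
  assert (He' : 0 < eps') by (unfold eps'; apply Rdiv_lt_0_compat; lra).
  destruct HN as [_ HN]. destruct HZ as [_ HZ']. destruct HL as [_ HL'].
  destruct (HN eps' He') as [M1 HM1]. destruct (HZ' eps' He') as [M2 HM2]. destruct (HL' eps' He') as [M3 HM3].
  set (M := Rmax (Rabs M1) (Rmax (Rabs M2) (Rabs M3))).
  assert (m1 : M1 <= M /\ M2 <= M /\ M3 <= M /\ 0 <= M).
  { unfold M. pose proof (Rmax_l (Rabs M1) (Rmax (Rabs M2) (Rabs M3))).
    pose proof (Rmax_r (Rabs M1) (Rmax (Rabs M2) (Rabs M3))).
    pose proof (Rmax_l (Rabs M2) (Rabs M3)). pose proof (Rmax_r (Rabs M2) (Rabs M3)).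
    pose proof (Rle_abs M1). pose proof (Rle_abs M2). pose proof (Rle_abs M3). pose proof (Rabs_pos M1). lra. }
  destruct (Rint_cont F (-M) M cF) as [VF HVF].
  destruct (Rint_cont w (-M) M cw) as [Vw HVw].
  assert (cL : continuity (fun x => s * (x - e) * w x)) by (apply cont_mul; [apply cont_lin|auto]).
  destruct (Rint_cont (fun x => s * (x - e) * w x) (-M) M cL) as [Vu HVu].
  destruct (Rint_cont H (-M) M cH) as [VH HVH].
  assert (HG : Rint G (-M) M ((Vw + al * Vu) + K1 * VH)) by (apply Rint_lin; [apply Rint_lin|]; auto).
  assert (VF <= (Vw + al * Vu) + K1 * VH) by (apply (Rint_mono F G (-M) M); auto; lra).
  assert (VH <= Z * (1 + a * exp (b/2))) by (apply (JB (-M) M); auto; lra).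
  assert (E1 : Rabs (VF - N) < eps') by (apply (HM1 (-M) M); auto; lra).
  assert (E2 : Rabs (Vw - Z) < eps') by (apply (HM2 (-M) M); auto; lra).
  assert (E3 : Rabs (Vu - L) < eps') by (apply (HM3 (-M) M); auto; lra).
  apply Rabs_def2 in E1. apply Rabs_def2 in E2. apply Rabs_def2 in E3.
  assert (K1pos : 0 <= K1).
  { unfold K1. apply Rmult_le_pos; [|lra]. apply Rmult_le_pos. nra. unfold Rdiv. apply Rmult_le_pos. lra. left; apply Rinv_0_lt_compat; nra. }
  assert (KZ : K1 * (Z * (1 + a * exp (b/2))) = al^2 * Kc a b c e * Z) by (unfold K1, Kc, Ce, beta; ring).
  assert (K1 * VH <= K1 * (Z * (1 + a * exp (b/2)))) by (apply Rmult_le_compat_l; auto).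
  assert (al * Vu <= al * L + al * eps') by nra.
  assert (eps' * (2 + al) = eps) by (unfold eps'; field; lra).
  nra.
Qed.

Lemma Zpos_tail w Z a b c : continuity w -> (forall x, 0 <= w x) -> ImpInt w Z -> 0 < a -> 0 < b ->
  (forall r I, 0 <= r -> Rint w (c-r) (c+r) I -> 1 - I / Z <= a * exp (-(b*r))) -> 0 < Z.
Proof.
  intros cw pw HZ apos bpos T.
  destruct (Rint_cont w c c cw) as [I0 HI0].
  assert (I0 <= Z) by (apply (ImpInt_ge w Z c c); auto; lra).
  pose proof (Rint_point w c I0 cw HI0). subst I0.
  destruct (Rle_lt_or_eq_dec 0 Z H) as [|HZ0]; auto. subst Z. exfalso.
  set (r := Rabs (ln a) / b + 1).
  assert (r0 : 0 <= r) by (unfold r; pose proof (Rabs_pos (ln a)); assert (0 <= Rabs (ln a) / b) by (unfold Rdiv; apply Rmult_le_pos; [lra| left; apply Rinv_0_lt_compat; lra]); lra).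
  destruct (Rint_cont w (c - r) (c + r) cw) as [I HI].
  specialize (T r I r0 HI). unfold Rdiv in T. rewrite Rinv_0, Rmult_0_r in T.
  assert (a * exp (-(b*r)) < 1).
  { rewrite <- (exp_ln a) at 1 by lra. rewrite <- exp_plus, <- exp_0. apply exp_increasing.
    unfold r. pose proof (Rle_abs (ln a)). 
    replace (b * (Rabs (ln a) / b + 1)) with (Rabs (ln a) + b) by (field; lra). lra. }
  lra.
Qed.

Lemma finish w Z a b c e s L d g q al :
  continuity w -> (forall x, 0 <= w x) -> ImpInt w Z -> 0 < a -> 0 < b -> (s = 1 \/ s = -1) ->
  (forall r I, 0 <= r -> Rint w (c-r) (c+r) I -> 1 - I / Z <= a * exp (-(b*r))) ->
  ImpInt (fun x => s * (x - e) * w x) L -> L <= - d * Z -> 0 < d ->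
  0 < al -> al <= b/4 -> al * Kc a b c e <= d/2 ->
  (forall x, g x = q * exp (al * (s * (x - e)))) -> 0 < q ->
  exists v, (exists N Z', ImpInt (fun x => g x * w x) N /\ ImpInt w Z' /\ v = N / Z') /\
            v <= q * (1 - al * d / 2).
Proof.
  intros cw pw HZ apos bpos Hs T HL HLd dpos alpos alle alK Hg qpos.
  assert (Zpos : 0 < Z) by (apply (Zpos_tail w Z a b c); auto).
  assert (T' : forall r I, 0 <= r -> Rint w (c-r) (c+r) I -> Z - I <= a * exp (-(b*r)) * Z).
  { intros r I r0 HI. specialize (T r I r0 HI).
    apply (Rmult_le_compat_r Z) in T; [|lra]. unfold Rdiv in T.
    replace ((1 - I * / Z) * Z) with (Z - I) in T by (field; lra). exact T. }
  destruct (core w Z a b c e s L cw pw HZ Zpos apos bpos Hs T' HL al alpos alle) as [N [HN HNb]].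
  exists (q * N / Z). split.
  - exists (q * N), Z. split; [|split; auto; field; lra].
    assert (cE : continuity (fun x => exp (al * (s * (x - e))) * w x)) by (apply cont_mul; [apply cont_exp_lin|auto]).
    pose proof (ImpInt_lin _ w q 0 N Z cE cw HN HZ) as H1.
    replace (q * N) with (q * N + 0 * Z) by ring. revert H1. apply ImpInt_ext.
    intro x. rewrite Hg. ring.
  - assert (Kpos : 0 <= Kc a b c e).
    { unfold Kc. apply Rmult_le_pos. apply Rmult_le_pos. unfold Rdiv. apply Rmult_le_pos. lra.
      left; apply Rinv_0_lt_compat; nra. left; apply exp_pos. pose proof (exp_pos (b/2)); nra. }
    assert (al^2 * Kc a b c e * Z <= al * (d/2) * Z).
    { replace (al^2 * Kc a b c e * Z) with (al * (al * Kc a b c e) * Z) by ring.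
      apply Rmult_le_compat_r; [lra|]. apply Rmult_le_compat_l; lra. }
    assert (N <= Z * (1 - al * d / 2)) by nra.
    unfold Rdiv. rewrite Rmult_assoc. apply Rmult_le_compat_l; [lra|].
    apply (Rmult_le_reg_r Z); auto. field_simplify; [|lra]. lra.
Qed.

Lemma cont_wgt f1 f2 y th : continuity f1 -> continuity f2 -> continuity (wgt f1 f2 y th).
Proof.
  intros c1 c2. unfold wgt. apply cont_mul.
  - intro x. apply (continuity_pt_comp (fun x => y - x) f1); auto.
    apply continuity_pt_minus. apply continuity_pt_const; intros ? ?; reflexivity.
    apply derivable_continuous_pt, derivable_pt_id.
  - intro x. apply (continuity_pt_comp (fun x => x - th) f2); auto.
    apply continuity_pt_minus. apply derivable_continuous_pt, derivable_pt_id.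
    apply continuity_pt_const; intros ? ?; reflexivity.
Qed.

Lemma pos_wgt f1 f2 y th : good_density f1 -> good_density f2 -> forall x, 0 <= wgt f1 f2 y th x.
Proof.
  intros [_ [_ [p1 _]]] [_ [_ [p2 _]]] x. unfold wgt.
  left; apply Rmult_lt_0_compat; auto.
Qed.

Lemma cont_id_mul f e : continuity f -> continuity (fun x => (x - e) * f x).
Proof.
  intro cf. apply cont_mul; auto. intro x. apply continuity_pt_minus.
  apply derivable_continuous_pt, derivable_pt_id. apply continuity_pt_const; intros ? ?; reflexivity.
Qed.

Lemma cont_x_mul f : continuity f -> continuity (fun x => x * f x).
Proof. intro cf. apply cont_mul; auto. intro x. apply derivable_continuous_pt, derivable_pt_id. Qed.

Lemma Kc_pos a b c e : 0 < a -> 0 < b -> 0 < Kc a b c e.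
Proof.
  intros. unfold Kc. apply Rmult_lt_0_compat. apply Rmult_lt_0_compat.
  unfold Rdiv. apply Rmult_lt_0_compat. lra. apply Rinv_0_lt_compat; nra. apply exp_pos.
  pose proof (exp_pos (b/2)); nra.
Qed.

Theorem mainTheorem4 (f1 f2 : R -> R) (y : R) :
  good_density f1 -> good_density f2 ->
  (forall d k, DUR f1 f2 y d k -> GTIP_Xt f1 f2 y ->
     exists a0, 0 < a0 /\ forall al, 0 < al -> al < a0 ->
       (forall th, k < th -> exists v,
          CondExp f1 f2 y th (fun x => exp (al * x)) v /\
          v <= exp (al * th) * (1 - al * d / 2)) /\
       (forall th, th < - k -> exists v,
          CondExp f1 f2 y th (fun x => exp (- (al * x))) v /\
          v <= exp (- (al * th)) * (1 - al * d / 2))) /\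
  (forall d k, PUR f1 f2 y d k -> GTIP_X f1 f2 y ->
     exists a0, 0 < a0 /\ forall al, 0 < al -> al < a0 ->
       (forall th, k < th -> exists v,
          CondExp f1 f2 y th (fun x => exp (al * (y - (x - th)))) v /\
          v <= exp (al * th) * (1 - al * d / 2)) /\
       (forall th, th < - k -> exists v,
          CondExp f1 f2 y th (fun x => exp (- (al * (y - (x - th))))) v /\
          v <= exp (- (al * th)) * (1 - al * d / 2))).
Proof.
  intros g1 g2.
  assert (c1 : continuity f1) by apply g1.
  assert (c2 : continuity f2) by apply g2.
  split.
  - intros d k [dpos [kpos HD]] [a [b [apos [bpos HG]]]].
    set (K := Kc a b 0 0).
    assert (Kp : 0 < K) by (apply Kc_pos; auto).
    exists (Rmin (b/4) (d / (2 * K))). split.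
    { apply Rmin_pos. lra. unfold Rdiv. apply Rmult_lt_0_compat; auto. apply Rinv_0_lt_compat; lra. }
    intros al alpos alt.
    assert (al1 : al <= b/4) by (pose proof (Rmin_l (b/4) (d/(2*K))); lra).
    assert (al2 : al * K <= d/2).
    { pose proof (Rmin_r (b/4) (d/(2*K))).
      assert (al <= d / (2*K)) by lra.
      apply (Rmult_le_compat_r K) in H0; [|lra]. replace (d / (2*K) * K) with (d/2) in H0 by (field; lra). lra. }
    assert (KK : forall th, Kc a b th th = K) by (intro; unfold K, Kc; rewrite !Rminus_diag; reflexivity).
    split.
    + intros th hth.
      destruct (HD th) as [v0 [[N [Z [HN [HZ ->]]]] Hv]]. { rewrite Rabs_right; lra. }
      set (w := wgt f1 f2 y th) in *.
      assert (cw : continuity w) by (apply cont_wgt; auto).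
      assert (pw := pos_wgt f1 f2 y th g1 g2).
      assert (T : forall r I, 0 <= r -> Rint w (th-r) (th+r) I -> 1 - I / Z <= a * exp (-(b*r))).
      { intros r I r0 HI. apply (HG th r r0 Z I HZ HI). }
      assert (Zpos : 0 < Z) by (apply (Zpos_tail w Z a b th); auto).
      assert (HL : ImpInt (fun x => 1 * (x - th) * w x) (1 * N + (- th) * Z)).
      { eapply ImpInt_ext; [|apply (ImpInt_lin (fun x => x * w x) w 1 (-th) N Z); auto].
        intro x; simpl; ring. apply cont_x_mul; auto. }
      assert (Nb : N <= (th - d) * Z).
      { pose proof (Rle_abs (N/Z)). rewrite (Rabs_right th) in Hv by lra.
        assert (N / Z <= th - d) by lra. apply (Rmult_le_compat_r Z) in H0; [|lra].
        unfold Rdiv in H0. rewrite Rmult_assoc, Rinv_l, Rmult_1_r in H0; lra. }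
      unfold CondExp. fold w.
      apply (finish w Z a b th th 1 (1 * N + - th * Z) d _ (exp (al * th)) al); auto; try lra.
      rewrite KK; lra.
      intro x. rewrite <- exp_plus. f_equal. ring.
      apply exp_pos.
    + intros th hth.
      destruct (HD th) as [v0 [[N [Z [HN [HZ ->]]]] Hv]]. { rewrite Rabs_left; lra. }
      set (w := wgt f1 f2 y th) in *.
      assert (cw : continuity w) by (apply cont_wgt; auto).
      assert (pw := pos_wgt f1 f2 y th g1 g2).
      assert (T : forall r I, 0 <= r -> Rint w (th-r) (th+r) I -> 1 - I / Z <= a * exp (-(b*r))).
      { intros r I r0 HI. apply (HG th r r0 Z I HZ HI). }
      assert (Zpos : 0 < Z) by (apply (Zpos_tail w Z a b th); auto).
      assert (HL : ImpInt (fun x => -1 * (x - th) * w x) (-1 * N + th * Z)).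
      { eapply ImpInt_ext; [|apply (ImpInt_lin (fun x => x * w x) w (-1) th N Z); auto].
        intro x; simpl; ring. apply cont_x_mul; auto. }
      assert (Nb : (th + d) * Z <= N).
      { pose proof (Rle_abs (-(N/Z))). rewrite Rabs_Ropp in H. rewrite (Rabs_left th) in Hv by lra.
        assert (th + d <= N / Z) by lra. apply (Rmult_le_compat_r Z) in H0; [|lra].
        unfold Rdiv in H0. rewrite Rmult_assoc, Rinv_l, Rmult_1_r in H0; lra. }
      unfold CondExp. fold w.
      apply (finish w Z a b th th (-1) (-1 * N + th * Z) d _ (exp (- (al * th))) al); auto; try lra.
      rewrite KK; lra.
      intro x. rewrite <- exp_plus. f_equal. ring.
      apply exp_pos.
  - intros d k [dpos [kpos HD]] [a [b [apos [bpos HG]]]].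
    set (K := Kc a b 0 y).
    assert (Kp : 0 < K) by (apply Kc_pos; auto).
    exists (Rmin (b/4) (d / (2 * K))). split.
    { apply Rmin_pos. lra. unfold Rdiv. apply Rmult_lt_0_compat; auto. apply Rinv_0_lt_compat; lra. }
    intros al alpos alt.
    assert (al1 : al <= b/4) by (pose proof (Rmin_l (b/4) (d/(2*K))); lra).
    assert (al2 : al * K <= d/2).
    { pose proof (Rmin_r (b/4) (d/(2*K))).
      assert (al <= d / (2*K)) by lra.
      apply (Rmult_le_compat_r K) in H0; [|lra]. replace (d / (2*K) * K) with (d/2) in H0 by (field; lra). lra. }
    split.
    + intros th hth.
      destruct (HD th) as [v0 [[N [Z [HN [HZ ->]]]] Hv]]. { rewrite Rabs_right; lra. }
      set (w := wgt f1 f2 y th) in *.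
      assert (cw : continuity w) by (apply cont_wgt; auto).
      assert (pw := pos_wgt f1 f2 y th g1 g2).
      assert (T : forall r I, 0 <= r -> Rint w (0-r) (0+r) I -> 1 - I / Z <= a * exp (-(b*r))).
      { intros r I r0 HI. apply (HG th r r0 Z I HZ HI). }
      assert (Zpos : 0 < Z) by (apply (Zpos_tail w Z a b 0); auto).
      assert (HL : ImpInt (fun x => -1 * (x - y) * w x) (-1 * N + 0 * Z)).
      { eapply ImpInt_ext; [|apply (ImpInt_lin (fun x => (x - y) * w x) w (-1) 0 N Z); auto].
        intro x; simpl; ring. apply cont_id_mul; auto. }
      assert (Nb : d * Z <= N).
      { unfold sgn in Hv. destruct (Rlt_dec 0 th); [|lra].
        apply (Rmult_le_compat_r Z) in Hv; [|lra].
        unfold Rdiv in Hv. rewrite Rmult_1_l, Rmult_assoc, Rinv_l, Rmult_1_r in Hv; lra. }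
      unfold CondExp. fold w.
      apply (finish w Z a b 0 y (-1) (-1 * N + 0 * Z) d _ (exp (al * th)) al); auto; try lra.
      intro x. rewrite <- exp_plus. f_equal. ring.
      apply exp_pos.
    + intros th hth.
      destruct (HD th) as [v0 [[N [Z [HN [HZ ->]]]] Hv]]. { rewrite Rabs_left; lra. }
      set (w := wgt f1 f2 y th) in *.
      assert (cw : continuity w) by (apply cont_wgt; auto).
      assert (pw := pos_wgt f1 f2 y th g1 g2).
      assert (T : forall r I, 0 <= r -> Rint w (0-r) (0+r) I -> 1 - I / Z <= a * exp (-(b*r))).
      { intros r I r0 HI. apply (HG th r r0 Z I HZ HI). }
      assert (Zpos : 0 < Z) by (apply (Zpos_tail w Z a b 0); auto).
      assert (HL : ImpInt (fun x => 1 * (x - y) * w x) (1 * N + 0 * Z)).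
      { eapply ImpInt_ext; [|apply (ImpInt_lin (fun x => (x - y) * w x) w 1 0 N Z); auto].
        intro x; simpl; ring. apply cont_id_mul; auto. }
      assert (Nb : N <= - d * Z).
      { unfold sgn in Hv. destruct (Rlt_dec 0 th); [lra|]. destruct (Rlt_dec th 0); [|lra].
        apply (Rmult_le_compat_r Z) in Hv; [|lra].
        unfold Rdiv in Hv. replace (-1 * (N * / Z) * Z) with (- N * (/ Z * Z)) in Hv by ring.
        rewrite Rinv_l, Rmult_1_r in Hv; lra. }
      unfold CondExp. fold w.
      apply (finish w Z a b 0 y 1 (1 * N + 0 * Z) d _ (exp (- (al * th))) al); auto; try lra.
      intro x. rewrite <- exp_plus. f_equal. ring.
      apply exp_pos.
Qed.
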